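(* Let $\alpha,\beta$ be positive integers and $\underline n=(n_1,\dots,n_d)$ a tuple of positive integers. Suppose the graph $\mathcal{G}^{\alpha,\beta}_{\underline n}$ contains a Hamiltonian cycle which contains two $\alpha$-sites and two $\beta$-sites whose supports are pairwise disjoint. Let $k\geq \alpha+\beta-1$ be an integer and $\underline m=(n_1,\dots,n_d,k)$. Then $\mathcal{G}^{\alpha,\beta}_{\underline m}$ contains a Hamiltonian cycle which contains two $\alpha$-sites and two $\beta$-sites whose supports are pairwise disjoint.
   Context: For a tuple $\underline n=(n_1,\dots,n_d)$, the board is $\mathcal{B}_{\underline n}=\{1,\dots,n_1\}\times\cdots\times\{1,\dots,n_d\}$. Let $\mathcal{C}^{\alpha,\beta}_d$ be the set of vectors in $\mathbb{Z}^d$ with exactly $d-2$ coordinates equal to $0$, exactly one coordinate in $\{\pm\alpha\}$ and exactly one coordinate in $\{\pm\beta\}$. The graph $\mathcal{G}^{\alpha,\beta}_{\underline n}$ has vertex set $\mathcal{B}_{\underline n}$ with $a,b$ adjacent iff $a-b\in\mathcal{C}^{\alpha,\beta}_d$. Let $(e_j)$ be the standard basis of $\mathbb{R}^d$. For a Hamiltonian cycle $(a^i)_{i\in I}$, $I=\{1,\dots,N\}$, indices mod $N$: a well-oriented $\alpha$-site is a quadruple $(a^n,a^{n+1},a^m,a^{m+1})$ with $n,m\in I$ such that for some $j$, $a^{n+1}-a^m=\pm(a^{m+1}-a^n)\in\{-\alpha e_j,\alpha e_j\}$; a non-well-oriented $\alpha$-site is a quadruple $(a^n,a^{n+1},a^{m+1},a^m)$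 such that for some $j$, $a^n-a^m=\pm(a^{m+1}-a^{n+1})\in\{-\alpha e_j,\alpha e_j\}$. An $\alpha$-site is either of these; $\beta$-sites are defined in the same way with $\beta$ in place of $\alpha$. The support of a site is the set $\{a^n,a^{n+1},a^m,a^{m+1}\}$. *)

(* Defs.v *)
(* Points of Z^d are represented as seq int of length d;
   a tuple n = (n_1,...,n_d) is a seq nat. *)
From mathcomp Require Import all_boot all_order all_algebra.
Set Implicit Arguments. Unset Strict Implicit. Unset Printing Implicit Defensive.
Import Order.TTheory GRing.Theory Num.Theory.
Local Open Scope ring_scope.

Definition point := seq int.

Definition vsub (a b : point) : point := [seq x.1 - x.2 | x <- zip a b].
Definition vneg (a : point) : point := [seq - x | x <- a].

(* the vector  g * e_j  in Z^d (coordinates indexed 0..d-1) *)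
Definition scal_e (d j : nat) (g : int) : point :=
  mkseq (fun i => if i == j then g else 0) d.

Definition in_board (n : seq nat) (p : point) : Prop :=
  size p = size n /\
  forall i : nat, (i < size n)%N -> 1 <= nth 0 p i <= (nth 0%N n i)%:Z.

Definition in_C (alpha beta : nat) (d : nat) (v : point) : Prop :=
  size v = d /\
  exists i j : nat, [/\ (i < d)%N, (j < d)%N, i != j,
    `|nth 0 v i| = alpha%:Z /\ `|nth 0 v j| = beta%:Z &
    forall l : nat, (l < d)%N -> l != i -> l != j -> nth 0 v l = 0].

Definition adj (alpha beta : nat) (n : seq nat) (a b : point) : Prop :=
  in_board n a /\ in_board n b /\ in_C alpha beta (size n) (vsub a b).

(* a cycle is a sequence (a^i)_{i in I}, I = {0..N-1}, indices mod N *)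
Definition pt (c : seq point) (i : nat) : point := nth [::] c (i %% size c).
Definition nxt (c : seq point) (i : nat) : nat := (i.+1 %% size c)%N.

Definition ham_cycle (alpha beta : nat) (n : seq nat) (c : seq point) : Prop :=
  [/\ (3 <= size c)%N, uniq c,
      (forall p : point, p \in c <-> in_board n p) &
      forall i : nat, (i < size c)%N -> adj alpha beta n (pt c i) (pt c (nxt c i))].

(* well-oriented g-site (a^n, a^{n+1}, a^m, a^{m+1}) *)
Definition wo_site (d : nat) (g : nat) (c : seq point) (n m : nat) : Prop :=
  exists j : nat, (j < d)%N /\
    (vsub (pt c (nxt c n)) (pt c m) = vsub (pt c (nxt c m)) (pt c n) \/
     vsub (pt c (nxt c n)) (pt c m) = vneg (vsub (pt c (nxt c m)) (pt c n))) /\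
    (vsub (pt c (nxt c n)) (pt c m) = scal_e d j (g%:Z) \/
     vsub (pt c (nxt c n)) (pt c m) = scal_e d j (- g%:Z)).

(* non-well-oriented g-site (a^n, a^{n+1}, a^{m+1}, a^m) *)
Definition nwo_site (d : nat) (g : nat) (c : seq point) (n m : nat) : Prop :=
  exists j : nat, (j < d)%N /\
    (vsub (pt c n) (pt c m) = vsub (pt c (nxt c m)) (pt c (nxt c n)) \/
     vsub (pt c n) (pt c m) = vneg (vsub (pt c (nxt c m)) (pt c (nxt c n)))) /\
    (vsub (pt c n) (pt c m) = scal_e d j (g%:Z) \/
     vsub (pt c n) (pt c m) = scal_e d j (- g%:Z)).

(* a g-site of the cycle c, given by the pair of indices (n, m) in I x I *)
Definition site (d : nat) (g : nat) (c : seq point) (s : nat * nat) : Prop :=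
  [/\ (s.1 < size c)%N, (s.2 < size c)%N &
      (wo_site d g c s.1 s.2 \/ nwo_site d g c s.1 s.2)].

Definition support (c : seq point) (s : nat * nat) : seq point :=
  [:: pt c s.1; pt c (nxt c s.1); pt c s.2; pt c (nxt c s.2)].

Definition disjoint_supp (c : seq point) (s t : nat * nat) : Prop :=
  forall p : point, p \in support c s -> p \in support c t -> False.

Definition has_good_cycle (alpha beta : nat) (n : seq nat) : Prop :=
  exists c : seq point, ham_cycle alpha beta n c /\
  exists s1 s2 s3 s4 : nat * nat,
    [/\ site (size n) alpha c s1, site (size n) alpha c s2,
        site (size n) beta c s3, site (size n) beta c s4 &
        [/\ disjoint_supp c s1 s2, disjoint_supp c s1 s3, disjoint_supp c s1 s4,
            disjoint_supp c s2 s3 & disjoint_supp c s2 s4 /\ disjoint_supp c s3 s4]].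

(* Main.v *)
Require Import Defs.
From mathcomp Require Import all_boot all_order all_algebra.
From mathcomp Require Import zify ring.
Set Implicit Arguments. Unset Strict Implicit. Unset Printing Implicit Defensive.

Section Pairs.
Variable T : eqType.

Fixpoint pairs (x : T) (s : seq T) : seq (T * T) :=
  if s is y :: s' then (x, y) :: pairs y s' else [::].

Definition cedges (C : seq T) : seq (T * T) :=
  if C is a :: s then pairs a (rcons s a) else [::].

Definition swp (e : T * T) : T * T := (e.2, e.1).

Definition UE (C : seq T) (a b : T) := (a, b) \in cedges C \/ (b, a) \in cedges C.

Lemma pairs_cat x s t : pairs x (s ++ t) = pairs x s ++ pairs (last x s) t.
Proof. by elim: s x => [|y s IH] x //=; rewrite IH. Qed.

Lemma pairs_rcons x s y : pairs x (rcons s y) = rcons (pairs x s) (last x s, y).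
Proof. by rewrite -cats1 pairs_cat cats1. Qed.

Lemma pairs_rev x s :
  pairs (last x s) (rev (belast x s)) = rev (map swp (pairs x s)).
Proof.
elim: s x => [|y s IH] x //=.
rewrite rev_cons pairs_rcons IH rev_cons /swp /=; congr rcons.
suff -> : last (last y s) (rev (belast y s)) = y by [].
case: s {IH} => [|z s] //=; rewrite rev_cons last_rcons //.
Qed.

Lemma cedges_cons a s : cedges (a :: s) = rcons (pairs a s) (last a s, a).
Proof. by rewrite /= pairs_rcons. Qed.

Lemma cedges_rot s t : cedges (s ++ t) =i cedges (t ++ s).
Proof.
case: s => [|a s]; first by rewrite cats0.
case: t => [|b t]; first by rewrite cats0.
move=> e; rewrite !cat_cons !cedges_cons !pairs_cat !last_cat /=.
rewrite !mem_rcons !in_cons !mem_cat !in_cons.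
by case: (e == _); case: (e == _); case: (e \in _); case: (e \in _).
Qed.

Lemma cedges_rev C : cedges (rev C) =i map swp (cedges C).
Proof.
case: C => [|a s] // e.
rewrite rev_cons -cats1 cedges_rot /= -rev_cons.
rewrite -(belast_rcons a s a) -[X in pairs X _](last_rcons a s a).
by rewrite pairs_rev mem_rev.
Qed.

Lemma mem_map_swp e l : (e \in map swp l) = (swp e \in l).
Proof.
have inj : injective swp by case=> ? ? [] ? ? [] -> ->.
by rewrite -(mem_map inj) -map_comp map_id_in // => -[].
Qed.

Lemma UE_sym C a b : UE C a b -> UE C b a.
Proof. by case=> ?; [right|left]. Qed.

Lemma UE_rev C a b : UE (rev C) a b <-> UE C a b.
Proof.
rewrite /UE !cedges_rev !mem_map_swp /swp /=; tauto.
Qed.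

Lemma pairs_mem x s a b : (a, b) \in pairs x s -> a \in x :: s /\ b \in s.
Proof.
elim: s x => [|y s IH] x //=; rewrite in_cons => /orP[/eqP[-> ->]|/IH [h1 h2]].
  by split; rewrite !in_cons eqxx ?orbT.
by split; rewrite in_cons; apply/orP; right.
Qed.

Lemma cedges_mem C a b : (a, b) \in cedges C -> a \in C /\ b \in C.
Proof.
case: C => [|x s] //= /pairs_mem [h1 h2]; split.
  by move: h1; rewrite in_cons mem_rcons => /orP[/eqP->|//]; exact: mem_head.
by move: h2; rewrite mem_rcons.
Qed.

End Pairs.
Arguments swp {T}.
Arguments pairs {T}.
Arguments cedges {T}.
Arguments UE {T}.

Lemma cedges_map (T U : eqType) (f : T -> U) C :
  cedges (map f C) = map (fun e => (f e.1, f e.2)) (cedges C).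
Proof.
have H x t : pairs (f x) (map f t) = map (fun e => (f e.1, f e.2)) (pairs x t).
  by elim: t x => [|y t IH] x //=; rewrite IH.
by case: C => [|a s] //=; rewrite -H map_rcons.
Qed.



Section Merge.
Variable T : eqType.
Implicit Types (C : seq T) (x y : T).

Lemma size_pairs x s : size (pairs x s) = size s.
Proof. by elim: s x => [|y s IH] x //=; rewrite IH. Qed.

Lemma nth_pairs x0 x s i : i < size s ->
  nth (x0, x0) (pairs x s) i = (nth x0 (x :: s) i, nth x0 s i).
Proof.
elim: s x i => [|y s IH] x [|i] //= Hi.
by rewrite IH.
Qed.

Lemma cedges_nth x0 C a b : (a, b) \in cedges C ->
  exists i, [/\ i < size C, nth x0 C i = a & nth x0 C (i.+1 %% size C) = b].
Proof.
case: C => [|x s] //= H.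
set i := index (a, b) (pairs x (rcons s x)).
have Hi : i < size (pairs x (rcons s x)) by rewrite index_mem.
have := nth_index (x0, x0) H; rewrite -/i nth_pairs; last by rewrite -(size_pairs x).
move: Hi; rewrite size_pairs size_rcons ltnS => Hi [Ha Hb].
clearbody i; exists i; split => //.
  by rewrite -Ha; case: i Hi {Ha Hb} => [|i] //= Hi; rewrite nth_rcons Hi.
rewrite -Hb nth_rcons; case: ltngtP Hi => // [Hlt _|-> _].
  by rewrite modn_small.
by rewrite modnn.
Qed.

Lemma nth_cedges x0 C i : i < size C ->
  (nth x0 C i, nth x0 C (i.+1 %% size C)) \in cedges C.
Proof.
case: C => [|x s] //= Hi.
have Hi' : i < size (pairs x (rcons s x)) by rewrite size_pairs size_rcons.
have := mem_nth (x0, x0) Hi'; rewrite nth_pairs ?size_rcons //.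
suff [-> ->] : nth x0 (x :: rcons s x) i = nth x0 (x :: s) i /\
   nth x0 (rcons s x) i = nth x0 (x :: s) (i.+1 %% (size s).+1) by [].
split.
  by case: i Hi {Hi'} => [|i] //= Hi; rewrite nth_rcons -ltnS Hi.
move: Hi; rewrite ltnS => Hi; rewrite nth_rcons; case: ltngtP Hi => // [Hlt _|-> _].
  by rewrite modn_small.
by rewrite modnn.
Qed.

Lemma pairs_split (z u v : T) (t : seq T) : (u, v) \in pairs z t ->
  exists l r, z :: t = l ++ u :: v :: r.
Proof.
elim: t z => [|y t IH] z //=; rewrite in_cons => /orP[/eqP[-> ->]|/IH [l [r E]]].
  by exists [::], t.
by exists (z :: l), r; rewrite E.
Qed.

Lemma cedges_norm C x x' : (x, x') \in cedges C -> x != x' ->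
  exists s, perm_eq C (x' :: rcons s x) /\ cedges C =i cedges (x' :: rcons s x).
Proof.
case: C => [|a s0] // H Hne.
have [l [r E]] := pairs_split (H : (x, x') \in pairs a (rcons s0 a)).
case/lastP: r E => [|r z] E.
  move: E; rewrite -rcons_cons -[l ++ _]/(l ++ [:: x] ++ [:: x']) catA cats1.
  move/rcons_inj => [E1 E2]; rewrite -E2 in Hne *.
  case: l E1 => [|b l] /=.
    by move=> [E3 E4]; rewrite E3 eqxx in Hne.
  by move=> [Ea ->]; exists l; rewrite cats1; split.
move: E; rewrite -rcons_cons -!rcons_cons -rcons_cat => /rcons_inj [E1 _].
exists (r ++ l); rewrite E1.
have -> : l ++ [:: x, x' & r] = rcons l x ++ (x' :: r) by rewrite cat_rcons.
have -> : x' :: rcons (r ++ l) x = (x' :: r) ++ rcons l x by rewrite rcons_cat.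
by split; [rewrite perm_catC | apply: cedges_rot].
Qed.

Definition same (a b u v : T) := (a = u /\ b = v) \/ (a = v /\ b = u).

Lemma mem_rev_swp (e : T * T) (l : seq (T * T)) : (e \in rev (map swp l)) = (swp e \in l).
Proof. by rewrite mem_rev mem_map_swp. Qed.

Lemma merge_dir C1 C2 (u u' v v' : T) :
  (u, u') \in cedges C1 -> (v, v') \in cedges C2 -> u != u' -> v != v' ->
  exists D, [/\ perm_eq D (C1 ++ C2),
   (forall a b, (a, b) \in cedges D ->
      [\/ UE C1 a b, UE C2 a b, same a b u v | same a b u' v']),
   (forall a b, UE C1 a b -> ~ same a b u u' -> UE D a b) &
   (forall a b, UE C2 a b -> ~ same a b v v' -> UE D a b)].
Proof.
move=> H1 H2 n1 n2.
have [s1 [P1 E1]] := cedges_norm H1 n1.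
have [s2 [P2 E2]] := cedges_norm H2 n2.
have UE1 a b : UE C1 a b <-> UE (u' :: rcons s1 u) a b by rewrite /UE !E1.
have UE2 a b : UE C2 a b <-> UE (v' :: rcons s2 v) a b by rewrite /UE !E2.
exists ((u' :: rcons s1 u) ++ rev (v' :: rcons s2 v)).
have revE : rev (v' :: rcons s2 v) = v :: rcons (rev s2) v'.
  by rewrite rev_cons rev_rcons.
have ED e : e \in cedges ((u' :: rcons s1 u) ++ rev (v' :: rcons s2 v)) =
   [|| e \in pairs u' (rcons s1 u), e == (u, v), swp e \in pairs v' (rcons s2 v)
     | e == (v', u')].
  rewrite revE cat_cons cedges_cons pairs_cat last_cat !last_rcons /=.
  rewrite last_rcons mem_rcons in_cons mem_cat in_cons.
  have -> : rcons (rev s2) v' = rev (belast v' (rcons s2 v)) by rewrite belast_rcons rev_cons.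
  rewrite -[X in pairs X (rev _)](last_rcons v' s2 v) pairs_rev mem_rev_swp.
  by case: (e == _); case: (e == _); case: (e \in _); case: (swp e \in _).
have EC1 e : e \in cedges (u' :: rcons s1 u) = (e \in pairs u' (rcons s1 u)) || (e == (u, u')).
  by rewrite cedges_cons last_rcons mem_rcons in_cons orbC.
have EC2 e : e \in cedges (v' :: rcons s2 v) = (e \in pairs v' (rcons s2 v)) || (e == (v, v')).
  by rewrite cedges_cons last_rcons mem_rcons in_cons orbC.
split.
- by rewrite perm_sym; apply: perm_cat P1 _; rewrite perm_sym perm_rev perm_sym.
- move=> a b; rewrite ED => /or4P[h|/eqP[-> ->]|h|/eqP[-> ->]].
  + by constructor 1; apply/UE1; left; rewrite EC1 h.
  + by constructor 3; left.
  + by constructor 2; apply/UE2; right; rewrite EC2 h.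
  + by constructor 4; right.
- move=> a b /UE1 [h|h] ns.
    left; move: h; rewrite EC1 ED => /orP[->//|/eqP[ha hb]].
    by case: ns; left.
  right; move: h; rewrite EC1 ED => /orP[->//|/eqP[ha hb]].
  by case: ns; right.
- move=> a b /UE2 [h|h] ns.
    right; move: h; rewrite EC2 ED => /orP[h|/eqP[ha hb]].
      by rewrite /swp /= h !orbT.
    by case: ns; left.
  left; move: h; rewrite EC2 ED => /orP[h|/eqP[ha hb]].
    by rewrite /swp /= h !orbT.
  by case: ns; right.
Qed.

Lemma mergeC C1 C2 x x' y y' :
  UE C1 x x' -> UE C2 y y' -> x != x' -> y != y' ->
  exists D, [/\ perm_eq D (C1 ++ C2),
   (forall a b, (a, b) \in cedges D ->
      [\/ UE C1 a b, UE C2 a b, same a b x y | same a b x' y']),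
   (forall a b, UE C1 a b -> ~ same a b x x' -> UE D a b) &
   (forall a b, UE C2 a b -> ~ same a b y y' -> UE D a b)].
Proof.
move=> h1 h2 n1 n2.
have sameC a b p q : same a b p q -> same a b q p by case=> -[-> ->]; [right|left].
have gen : forall C2', perm_eq C2' C2 -> (forall a b, UE C2' a b <-> UE C2 a b) ->
   forall u u' v v', (u, u') \in cedges C1 -> (v, v') \in cedges C2' ->
   u != u' -> v != v' ->
   (forall a b, same a b u u' -> same a b x x') ->
   (forall a b, same a b v v' -> same a b y y') ->
   (forall a b, same a b u v \/ same a b u' v' -> same a b x y \/ same a b x' y') ->
   exists D, [/\ perm_eq D (C1 ++ C2),
   (forall a b, (a, b) \in cedges D ->
      [\/ UE C1 a b, UE C2 a b, same a b x y | same a b x' y']),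
   (forall a b, UE C1 a b -> ~ same a b x x' -> UE D a b) &
   (forall a b, UE C2 a b -> ~ same a b y y' -> UE D a b)].
  move=> C2' P2 U2 u u' v v' e1 e2 m1 m2 S1 S2 S3.
  have [D [PD ED HD1 HD2]] := merge_dir e1 e2 m1 m2.
  exists D; split.
  - by rewrite (permPl PD) perm_cat2l.
  - move=> a b /ED [H|H|H|H].
    + by constructor 1.
    + by constructor 2; apply/U2.
    + by case: (S3 a b (or_introl H)); [constructor 3|constructor 4].
    + by case: (S3 a b (or_intror H)); [constructor 3|constructor 4].
  - by move=> a b H ns; apply: HD1 => // /S1.
  - by move=> a b H ns; apply: HD2; [apply/U2 | move/S2].
have revP : perm_eq (rev C2) C2 by rewrite perm_rev.
have revU a b : UE (rev C2) a b <-> UE C2 a b by apply: UE_rev.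
have idU a b : UE C2 a b <-> UE C2 a b by [].
have cedges_rev' p q : (p, q) \in cedges C2 -> (q, p) \in cedges (rev C2).
  by move=> H; rewrite cedges_rev mem_map_swp.
have n1' : x' != x by rewrite eq_sym.
have n2' : y' != y by rewrite eq_sym.
have swp3 a b : same a b x' y' \/ same a b x y -> same a b x y \/ same a b x' y'.
  by case=> ?; [right|left].
case: h1 => e1; case: h2 => e2.
- exact: (gen C2 (perm_refl _) idU x x' y y' e1 e2 n1 n2 (fun a b h => h) (fun a b h => h) (fun a b h => h)).
- exact: (gen (rev C2) revP revU x x' y y' e1 (cedges_rev' _ _ e2) n1 n2 (fun a b h => h) (fun a b h => h) (fun a b h => h)).
- exact: (gen (rev C2) revP revU x' x y' y e1 (cedges_rev' _ _ e2) n1' n2' (fun a b h => sameC _ _ _ _ h) (fun a b h => sameC _ _ _ _ h) (fun a b h => swp3 a b h)).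
- exact: (gen C2 (perm_refl _) idU x' x y' y e1 e2 n1' n2' (fun a b h => sameC _ _ _ _ h) (fun a b h => sameC _ _ _ _ h) (fun a b h => swp3 a b h)).
Qed.

End Merge.

Section NT.
Variables al be : nat.
Hypotheses (Hal : 0 < al) (Hbe : 0 < be) (Hco : coprime al be).
Definition uu j := (j * al) %% (al + be).

Lemma coM : coprime (al + be) al.
Proof. by rewrite /coprime gcdnC gcdnDl. Qed.

Lemma uu_lt j : uu j < al + be.
Proof. by rewrite ltn_pmod // addn_gt0 Hal. Qed.

Lemma uu_pos j : 0 < j < al + be -> 0 < uu j.
Proof.
move=> /andP[j0 jM]; rewrite lt0n; apply/negP => /eqP H.
have : (al + be) %| j * al by rewrite /dvdn -/(uu j) H.
rewrite Gauss_dvdl ?coM // => /(dvdn_leq j0); lia.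
Qed.

Lemma uu_inj i j : 0 < i < al + be -> 0 < j < al + be -> uu i = uu j -> i = j.
Proof.
wlog le_ij : i j / i <= j.
  move=> W Hi Hj E; case: (leqP i j) => H; first exact: W.
  by apply/esym/W => //; rewrite ltnW.
move=> /andP[i0 iM] /andP[j0 jM] /eqP E.
have : (al + be) %| (j - i) * al.
  by rewrite mulnBl -eqn_mod_dvd ?leq_mul2r ?le_ij ?orbT // eq_sym.
rewrite Gauss_dvdl ?coM //.
case: (posnP (j - i)) => [H|H]; first by move=> _; lia.
move/(dvdn_leq H); lia.
Qed.

Lemma uu_S j : uu j.+1 = if uu j + al < al + be then uu j + al else uu j - be.
Proof.
have Hu := uu_lt j.
rewrite /uu mulSn -modnDmr addnC -/(uu j).
case: ifP => H; first by rewrite modn_small.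
have -> : uu j + al = (uu j - be) + (al + be) by move: H; lia.
rewrite modnDr modn_small //; lia.
Qed.

Lemma uu_1 : uu 1 = al.
Proof. by rewrite /uu mul1n modn_small //; lia. Qed.

Lemma uu_perm : [seq uu j | j <- iota 1 (al + be - 1)] =i iota 1 (al + be - 1).
Proof.
have U : uniq [seq uu j | j <- iota 1 (al + be - 1)].
  rewrite map_inj_in_uniq ?iota_uniq // => i j; rewrite !mem_iota => Hi Hj.
  by apply: uu_inj; lia.
have S : {subset [seq uu j | j <- iota 1 (al + be - 1)] <= iota 1 (al + be - 1)}.
  move=> x /mapP [j Hj ->]; rewrite mem_iota.
  have := uu_lt j; move: Hj; rewrite mem_iota => Hj Hu.
  have : 0 < uu j by apply: uu_pos; lia.
  lia.
have Sz : size (iota 1 (al + be - 1)) <= size [seq uu j | j <- iota 1 (al + be - 1)].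
  by rewrite size_map.
by have [_ E] := uniq_min_size U S Sz.
Qed.
End NT.

Import Order.TTheory GRing.Theory Num.Theory.
Local Open Scope ring_scope.

Definition lft (t : nat) (q : point) : point := rcons q (t%:Z).
Definition gv (d g j : nat) (v : point) :=
  v = scal_e d j (g%:Z) \/ v = scal_e d j (- g%:Z).

Lemma natz_neq0 m : (0 < m)%N -> (m%:Z == 0) = false.
Proof. by case: m. Qed.

Lemma size_vsub a b : size (vsub a b) = minn (size a) (size b).
Proof. by rewrite size_map size_zip. Qed.

Lemma nth_vsub a b l : size a = size b -> (l < size a)%N ->
  nth 0 (vsub a b) l = nth 0 a l - nth 0 b l.
Proof.
move=> E H; rewrite (nth_map (0, 0)) ?size_zip ?E ?minnn -?E //.
by rewrite nth_zip.
Qed.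

Lemma vsub_rcons a b x y : size a = size b ->
  vsub (rcons a x) (rcons b y) = rcons (vsub a b) (x - y).
Proof. by move=> E; rewrite /vsub zip_rcons // map_rcons. Qed.

Lemma vsub_sym a b : vsub b a = vneg (vsub a b).
Proof.
elim: a b => [|x a IH] [|y b] //=.
by rewrite /vsub /= in IH *; rewrite IH opprB.
Qed.

Lemma vnegK v : vneg (vneg v) = v.
Proof. by rewrite /vneg -map_comp map_id_in // => x _ /=; rewrite opprK. Qed.

Lemma size_scal d j g : size (scal_e d j g) = d.
Proof. exact: size_mkseq. Qed.

Lemma nth_scal d j g l : (l < d)%N -> nth 0 (scal_e d j g) l = if l == j then g else 0.
Proof. by move=> H; rewrite /scal_e nth_mkseq. Qed.

Lemma vneg_scal d j g : vneg (scal_e d j g) = scal_e d j (- g).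
Proof.
rewrite /vneg /scal_e /mkseq -map_comp; apply: eq_map => i /=.
by case: (i == j); rewrite ?oppr0.
Qed.

Lemma scal_rcons d j g : (j < d)%N -> scal_e d.+1 j g = rcons (scal_e d j g) 0.
Proof.
move=> H; rewrite /scal_e mkseqS; congr rcons.
by case: eqP => // E; rewrite E ltnn in H.
Qed.

Lemma size_vneg v : size (vneg v) = size v.
Proof. exact: size_map. Qed.

Lemma nth_vneg v l : nth 0 (vneg v) l = - nth 0 v l.
Proof.
case: (ltnP l (size v)) => H.
  by rewrite (nth_map 0).
by rewrite !nth_default ?size_vneg // oppr0.
Qed.

Lemma in_C_vneg al be d v : in_C al be d v -> in_C al be d (vneg v).
Proof.
case=> Hs [i [j [Hi Hj Hij [Ha Hb] Hl]]]; split; first by rewrite size_vneg.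
exists i, j; split => //; first by rewrite !nth_vneg !normrN.
by move=> l H1 H2 H3; rewrite nth_vneg Hl // oppr0.
Qed.

Lemma adj_sym al be n a b : adj al be n a b -> adj al be n b a.
Proof.
by case=> Ha [Hb HC]; split => //; split => //; rewrite vsub_sym; apply: in_C_vneg.
Qed.

Lemma adj_neq al be n a b : (0 < al)%N -> adj al be n a b -> a != b.
Proof.
move=> Hal [[Ha _] [_ [Hs [i [j [Hi Hj _ [H1 _] _]]]]]]; apply/eqP => E.
subst b.
have Hi' : (i < size a)%N by rewrite Ha.
move: H1; rewrite nth_vsub // subrr normr0 => /esym/eqP.
by rewrite natz_neq0.
Qed.

Lemma not_C_scal al be d v j g : (0 < al)%N -> (0 < be)%N ->
  in_C al be d v -> v = scal_e d j g -> False.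
Proof.
move=> Hal Hbe [Hs [i [j' [Hi Hj Hij [H1 H2] _]]]] E; subst v.
move: H1 H2; rewrite !nth_scal //.
case: ifP => E1; case: ifP => E2.
- by move: Hij; rewrite (eqP E1) (eqP E2) eqxx.
- by rewrite normr0 => _ /esym/eqP; rewrite natz_neq0.
- by rewrite normr0 => /esym/eqP; rewrite natz_neq0.
- by rewrite normr0 => /esym/eqP; rewrite natz_neq0.
Qed.

Lemma lft_inj t t' q q' : lft t q = lft t' q' -> t = t' /\ q = q'.
Proof. by move/rcons_inj => [-> [->]]. Qed.

Lemma board_lft n k t q : in_board n q -> (1 <= t <= k)%N ->
  in_board (rcons n k) (lft t q).
Proof.
move=> [Hs Hq] /andP[t1 tk]; split; first by rewrite !size_rcons Hs.
move=> i; rewrite size_rcons ltnS leq_eqVlt => /orP[/eqP ->|Hi].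
  by rewrite !nth_rcons -Hs !ltnn !eqxx !lez_nat t1 tk.
by rewrite /lft !nth_rcons Hs Hi Hq.
Qed.

Lemma board_inv n k p : in_board (rcons n k) p ->
  exists t q, [/\ (1 <= t <= k)%N, in_board n q & p = lft t q].
Proof.
move=> [Hs Hp]; case/lastP: p Hs Hp => [|q z]; first by rewrite size_rcons.
rewrite !size_rcons => /eqP; rewrite eqSS => /eqP Hs Hp.
have := Hp (size n) (ltnSn _).
rewrite !nth_rcons -Hs !ltnn !eqxx => /andP[z1 zk].
case: z Hp z1 zk => [t|t] Hp //; rewrite ?lez_nat => z1 zk.
exists t, q; split => //; first by rewrite z1.
split => // i Hi; have := Hp i (ltnW Hi).
by rewrite !nth_rcons Hs Hi.
Qed.

Lemma adj_lft al be n k t a b : (1 <= t <= k)%N -> adj al be n a b ->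
  adj al be (rcons n k) (lft t a) (lft t b).
Proof.
move=> Ht [Ha [Hb [Hs [i [j [Hi Hj Hij Hv Hl]]]]]].
split; first exact: board_lft.
split; first exact: board_lft.
have Esz : size a = size b by case: Ha => ->; case: Hb => ->.
rewrite /lft vsub_rcons // subrr; split; first by rewrite !size_rcons Hs.
exists i, j; rewrite size_rcons; split; rewrite ?(ltn_trans Hi) ?(ltn_trans Hj) //.
  by rewrite !nth_rcons Hs Hi Hj.
move=> l; rewrite ltnS leq_eqVlt => /orP[/eqP ->|Hl'] H1 H2.
  by rewrite nth_rcons Hs ltnn eqxx.
by rewrite nth_rcons Hs Hl' Hl.
Qed.

Lemma adj_cross al be n k t t' P Q j g h (sg : int) :
  in_board n P -> in_board n Q -> (j < size n)%N ->
  (1 <= t <= k)%N -> (1 <= t' <= k)%N ->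
  vsub P Q = scal_e (size n) j sg ->
  ((g = al /\ h = be) \/ (g = be /\ h = al)) ->
  `|sg| = g%:Z -> `|t%:Z - t'%:Z| = h%:Z ->
  adj al be (rcons n k) (lft t P) (lft t' Q).
Proof.
move=> HP HQ Hj Ht Ht' Hv Hgh Hsg Hth.
split; first exact: board_lft.
split; first exact: board_lft.
have Esz : size P = size Q by case: HP => ->; case: HQ => ->.
rewrite /lft vsub_rcons // Hv; split; first by rewrite size_rcons size_scal size_rcons.
rewrite size_rcons.
have Hn : (size n < (size n).+1)%N by [].
have Hj' : (j < (size n).+1)%N by rewrite ltnW.
have Hne : j != size n by rewrite neq_ltn Hj.
have nj : nth 0 (rcons (scal_e (size n) j sg) (t%:Z - t'%:Z)) j = sg.
  by rewrite nth_rcons size_scal Hj nth_scal // eqxx.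
have nn : nth 0 (rcons (scal_e (size n) j sg) (t%:Z - t'%:Z)) (size n) = t%:Z - t'%:Z.
  by rewrite nth_rcons size_scal ltnn eqxx.
have nl l : (l < (size n).+1)%N -> l != j -> l != size n ->
   nth 0 (rcons (scal_e (size n) j sg) (t%:Z - t'%:Z)) l = 0.
  move=> H1 H2 H3; rewrite nth_rcons size_scal.
  have H4 : (l < size n)%N by rewrite ltn_neqAle H3 -ltnS.
  by rewrite H4 nth_scal // (negbTE H2).
case: Hgh => [[Eg Eh]|[Eg Eh]]; rewrite Eg in Hsg; rewrite Eh in Hth.
- exists j; exists (size n).
  split; [exact Hj'|exact Hn|exact Hne|rewrite nj nn; split => //|].
  by move=> l H1 H2 H3; apply: nl.
- exists (size n); exists j.
  split; [exact Hn|exact Hj'|by rewrite eq_sym|rewrite nj nn; split => //|].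
  by move=> l H1 H2 H3; apply: nl.
Qed.

Lemma gv_lft d g j P Q t : size P = d -> size Q = d -> (j < d)%N ->
  gv d g j (vsub P Q) -> gv d.+1 g j (vsub (lft t P) (lft t Q)).
Proof.
move=> HP HQ Hj; rewrite /gv /lft vsub_rcons ?HP ?HQ // subrr !scal_rcons //.
by case=> ->; [left|right].
Qed.

Definition osite (C : seq point) d g (P P' Q Q' : point) :=
  [/\ UE C P P', UE C Q Q' &
      exists j, (j < d)%N /\ gv d g j (vsub P Q) /\ gv d g j (vsub P' Q')].

Lemma gv_neg d g j v : gv d g j v -> gv d g j (vneg v).
Proof. by case=> ->; rewrite vneg_scal ?opprK; [right|left]. Qed.

Lemma gv_pm d g j X Y : gv d g j X -> (X = Y \/ X = vneg Y) -> gv d g j Y.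
Proof. by move=> H [<-|E] //; rewrite -(vnegK Y) -E; apply: gv_neg. Qed.

Lemma gv_rel d g j X Z : gv d g j X -> gv d g j Z -> X = Z \/ X = vneg Z.
Proof.
by case=> ->; case=> ->; rewrite vneg_scal ?opprK; auto.
Qed.

Lemma pt_edge (C : seq point) i : (i < size C)%N ->
  (pt C i, pt C (nxt C i)) \in cedges C.
Proof.
move=> H; rewrite /pt /nxt modn_mod modn_small //.
exact: nth_cedges.
Qed.

Lemma edge_pt (C : seq point) a b : (a, b) \in cedges C ->
  exists i, [/\ (i < size C)%N, pt C i = a & pt C (nxt C i) = b].
Proof.
move=> /(cedges_nth [::]) [i [Hi Ha Hb]]; exists i; split => //.
  by rewrite /pt modn_small.
by rewrite /pt /nxt modn_mod.
Qed.

Lemma site_osite d g (c : seq point) s : site d g c s ->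
  exists P P' Q Q', osite c d g P P' Q Q' /\ Defs.support c s =i [:: P; P'; Q; Q'].
Proof.
case: s => n m [/= Hn Hm [[j [Hj [E1 E2]]]|[j [Hj [E1 E2]]]]].
- exists (pt c (nxt c n)), (pt c n), (pt c m), (pt c (nxt c m)); split.
    split; [right; exact: pt_edge | left; exact: pt_edge |].
    exists j; split => //; split => //.
    rewrite vsub_sym; apply: gv_neg; exact: gv_pm E2 E1.
  by move=> z; rewrite /Defs.support /= !inE; case: (z == _); case: (z == _).
- exists (pt c n), (pt c (nxt c n)), (pt c m), (pt c (nxt c m)); split.
    split; [left; exact: pt_edge | left; exact: pt_edge |].
    exists j; split => //; split => //.
    rewrite vsub_sym; apply: gv_neg; exact: gv_pm E2 E1.
  by [].
Qed.

Lemma osite_site d g (D : seq point) P P' Q Q' : osite D d g P P' Q Q' ->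
  exists s, site d g D s /\ Defs.support D s =i [:: P; P'; Q; Q'].
Proof.
case=> U1 U2 [j [Hj [G1 G2]]].
have G1' : gv d g j (vsub Q P) by rewrite vsub_sym; apply: gv_neg.
have G2' : gv d g j (vsub Q' P') by rewrite vsub_sym; apply: gv_neg.
case: U1 => /edge_pt [i [Hi Ea Eb]]; case: U2 => /edge_pt [l [Hl Ec Ed]].
- exists (i, l); split; last first.
    by move=> z; rewrite /Defs.support /= Ea Eb Ec Ed.
  split => //; right; exists j; split => //.
  rewrite /= Ea Eb Ec Ed; split; [exact: (gv_rel G1 G2') | exact: G1].
- exists (i, l); split; last first.
    move=> z; rewrite /Defs.support /= Ea Eb Ec Ed !inE.
    by case: (z == P); case: (z == P'); case: (z == Q); case: (z == Q').
  split => //; left; exists j; split => //.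
  rewrite /= Ea Eb Ec Ed; split; [exact: (gv_rel G2 G1') | exact: G2].
- exists (i, l); split; last first.
    move=> z; rewrite /Defs.support /= Ea Eb Ec Ed !inE.
    by case: (z == P); case: (z == P'); case: (z == Q); case: (z == Q').
  split => //; left; exists j; split => //.
  rewrite /= Ea Eb Ec Ed; split; [exact: (gv_rel G1 G2') | exact: G1].
- exists (i, l); split; last first.
    move=> z; rewrite /Defs.support /= Ea Eb Ec Ed !inE.
    by case: (z == P); case: (z == P'); case: (z == Q); case: (z == Q').
  split => //; right; exists j; split => //.
  rewrite /= Ea Eb Ec Ed; split; [exact: (gv_rel G2 G1') | exact: G2].
Qed.

Lemma osite_sym C d g P P' Q Q' : osite C d g P P' Q Q' -> osite C d g Q Q' P P'.
Proof.
case=> U1 U2 [j [Hj [G1 G2]]]; split => //; exists j; split => //.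
by split; rewrite vsub_sym; apply: gv_neg.
Qed.

Definition AdjC al be mb (C : seq point) :=
  forall a b, (a, b) \in cedges C -> adj al be mb a b.

Lemma AdjC_UE al be mb C a b : AdjC al be mb C -> UE C a b -> adj al be mb a b.
Proof. by move=> H [/H|/H/adj_sym]. Qed.

Lemma good_of al be mm D (X1 X2 X3 X4 : seq point) :
  ham_cycle al be mm D ->
  (exists P P' Q Q', X1 = [:: P; P'; Q; Q'] /\ osite D (size mm) al P P' Q Q') ->
  (exists P P' Q Q', X2 = [:: P; P'; Q; Q'] /\ osite D (size mm) al P P' Q Q') ->
  (exists P P' Q Q', X3 = [:: P; P'; Q; Q'] /\ osite D (size mm) be P P' Q Q') ->
  (exists P P' Q Q', X4 = [:: P; P'; Q; Q'] /\ osite D (size mm) be P P' Q Q') ->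
  (forall p, p \in X1 -> p \in X2 -> False) ->
  (forall p, p \in X1 -> p \in X3 -> False) ->
  (forall p, p \in X1 -> p \in X4 -> False) ->
  (forall p, p \in X2 -> p \in X3 -> False) ->
  (forall p, p \in X2 -> p \in X4 -> False) ->
  (forall p, p \in X3 -> p \in X4 -> False) ->
  has_good_cycle al be mm.
Proof.
move=> Hh [P1 [P1' [Q1 [Q1' [-> O1]]]]] [P2 [P2' [Q2 [Q2' [-> O2]]]]]
  [P3 [P3' [Q3 [Q3' [-> O3]]]]] [P4 [P4' [Q4 [Q4' [-> O4]]]]] D12 D13 D14 D23 D24 D34.
have [s1 [S1 E1]] := osite_site O1.
have [s2 [S2 E2]] := osite_site O2.
have [s3 [S3 E3]] := osite_site O3.
have [s4 [S4 E4]] := osite_site O4.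
exists D; split => //; exists s1, s2, s3, s4; split => //; split;
  try split; move=> p; rewrite ?E1 ?E2 ?E3 ?E4; by [apply: D12|apply: D13|apply: D14|apply: D23|apply: D24|apply: D34].
Qed.

Lemma disj_lft t t' (l l' : seq point) :
  (t <> t' \/ (forall p, p \in l -> p \in l' -> False)) ->
  forall p, p \in map (lft t) l -> p \in map (lft t') l' -> False.
Proof.
move=> H p /mapP [q Hq ->] /mapP [q' Hq' /lft_inj [E1 E2]].
by case: H => [|H]; [apply | apply: (H q)] => //; rewrite E2.
Qed.

Section Construction.
Variables (al be : nat) (n : seq nat) (k : nat) (c : seq point).
Hypotheses (Hal : (0 < al)%N) (Hbe : (0 < be)%N).
Hypotheses (Hc : uniq c) (Hcb : forall p, p \in c <-> in_board n p)
  (Hca : AdjC al be n c).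
Variables (PA PA' QA QA' PB PB' QB QB' : point).
Hypotheses (HA : osite c (size n) al PA PA' QA QA')
  (HB : osite c (size n) be PB PB' QB QB').
Hypothesis HAB : forall p, p \in [:: PA; PA'; QA; QA'] ->
  p \in [:: PB; PB'; QB; QB'] -> False.
Variable KE : seq (point * point).
Hypothesis HKE : forall e, e \in KE -> UE c e.1 e.2.
Hypothesis HKU : forall e, e \in KE ->
  e.1 \in [:: PA; PA'; QA; QA'; PB; PB'; QB; QB'] -> False.

Definition L t := map (lft t) c.
Definition mb := rcons n k.

Definition Inv (S : seq nat) (D : seq point) :=
  [/\ uniq D, AdjC al be mb D,
      (forall p, p \in D <-> exists t q, [/\ t \in S, q \in c & p = lft t q]),
      (forall t, t \in S -> (1 <= t <= k)%N) &
      (forall t e, t \in S -> e \in KE -> UE D (lft t e.1) (lft t e.2))].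

Lemma lft_injt t : injective (lft t).
Proof. by move=> q q' /lft_inj []. Qed.

Lemma UE_L t u v : UE c u v -> UE (L t) (lft t u) (lft t v).
Proof.
rewrite /UE /L cedges_map.
by case=> H; [left|right]; apply: (map_f (fun e => (lft t e.1, lft t e.2)) H).
Qed.

Lemma Inv_layer t : (1 <= t <= k)%N -> Inv [:: t] (L t).
Proof.
move=> Ht; split.
- by rewrite map_inj_uniq //; exact: lft_injt.
- move=> a b; rewrite /L cedges_map => /mapP [[u v] H [-> ->]] /=.
  apply: adj_lft => //; exact: Hca.
- move=> p; split.
    by move=> /mapP [q Hq ->]; exists t, q; split => //; rewrite inE.
  by move=> [t' [q [Ht' Hq ->]]]; move: Ht'; rewrite inE => /eqP ->; apply: map_f.
- by move=> t'; rewrite inE => /eqP ->.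
- by move=> t' e; rewrite inE => /eqP -> He; apply: UE_L; apply: HKE.
Qed.

Lemma Inv_eq S S' D : S =i S' -> Inv S D -> Inv S' D.
Proof.
move=> E [H1 H2 H3 H4 H5]; split => //.
- move=> p; rewrite H3; split; move=> [t [q [Ht Hq ->]]]; exists t, q; split => //.
    by rewrite -E.
  by rewrite E.
- by move=> t; rewrite -E; apply: H4.
- by move=> t e; rewrite -E; apply: H5.
Qed.

Lemma UE_c_mem u v : UE c u v -> u \in c /\ v \in c.
Proof.
by case=> /cedges_mem [h1 h2].
Qed.

Lemma size_c q : q \in c -> size q = size n.
Proof. by move/Hcb => []. Qed.

Lemma Inv_step S D t t' g X X' Y Y' :
  Inv S D -> t \notin S -> (1 <= t <= k)%N -> t' \in S ->
  osite c (size n) g X X' Y Y' ->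
  ((g = al /\ `|t%:Z - t'%:Z| = be%:Z) \/ (g = be /\ `|t%:Z - t'%:Z| = al%:Z)) ->
  X \in [:: PA; PA'; QA; QA'; PB; PB'; QB; QB'] ->
  X' \in [:: PA; PA'; QA; QA'; PB; PB'; QB; QB'] ->
  Y \in [:: PA; PA'; QA; QA'; PB; PB'; QB; QB'] ->
  Y' \in [:: PA; PA'; QA; QA'; PB; PB'; QB; QB'] ->
  UE D (lft t' X) (lft t' X') ->
  exists D', [/\ Inv (t :: S) D',
    (forall a b, UE D a b -> ~ same a b (lft t' X) (lft t' X') -> UE D' a b) &
    (forall u v, UE c u v -> ~ same u v Y Y' -> UE (L t) (lft t u) (lft t v) ->
        UE D' (lft t u) (lft t v))].
Proof.
move=> [I1 I2 I3 I4 I5] tS Ht t'S [U1 U2 [j [Hj [G1 G2]]]] Hgt mX mX' mY mY' UD.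
have Ht' := I4 _ t'S.
have [X1 X2] := UE_c_mem U1.
have [Y1 Y2] := UE_c_mem U2.
have nX : lft t' X != lft t' X'.
  apply: contraTneq (adj_neq Hal (AdjC_UE Hca U1)) => /lft_injt ->.
  by rewrite eqxx.
have nY : lft t Y != lft t Y'.
  apply: contraTneq (adj_neq Hal (AdjC_UE Hca U2)) => /lft_injt ->.
  by rewrite eqxx.
have cross P Q : P \in c -> Q \in c -> gv (size n) g j (vsub P Q) ->
    adj al be mb (lft t' P) (lft t Q).
  move=> HP HQ Hgv; have HbP := (Hcb P).1 HP; have HbQ := (Hcb Q).1 HQ.
  case: Hgt => [[Eg Eh]|[Eg Eh]]; rewrite Eg in Hgv; case: Hgv => Hv.
  - apply: (adj_cross HbP HbQ Hj Ht' Ht Hv (g:=al) (h:=be)); first by left.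
      by [].
    by rewrite distrC.
  - apply: (adj_cross HbP HbQ Hj Ht' Ht Hv (g:=al) (h:=be)); first by left.
      by rewrite normrN.
    by rewrite distrC.
  - apply: (adj_cross HbP HbQ Hj Ht' Ht Hv (g:=be) (h:=al)); first by right.
      by [].
    by rewrite distrC.
  - apply: (adj_cross HbP HbQ Hj Ht' Ht Hv (g:=be) (h:=al)); first by right.
      by rewrite normrN.
    by rewrite distrC.
have [D' [PD ED H1 H2]] := mergeC UD (UE_L t U2) nX nY.
have sfst a b u v : same a b u v -> a = u \/ a = v by case=> -[-> _]; [left|right].
have [L1 L2 L3 L4 L5] := Inv_layer Ht.
exists D'; split; [split| exact: H1 |].
- rewrite (perm_uniq PD) cat_uniq I1 L1 /= andbT.
  apply/hasPn => p /mapP [q Hq ->]; apply/negP => /I3 [t0 [q0 [Ht0 _ E]]].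
  by move: (lft_inj E) => [E1 _]; rewrite E1 Ht0 in tS.
- move=> a b /ED [h|h|h|h].
  + exact: AdjC_UE I2 h.
  + exact: AdjC_UE L2 h.
  + by case: h => -[-> ->]; [apply: cross | apply: adj_sym; apply: cross].
  + by case: h => -[-> ->]; [apply: cross | apply: adj_sym; apply: cross].
- move=> p; rewrite (perm_mem PD) mem_cat; split.
    case/orP => [/I3 [t0 [q [H0 Hq ->]]]|/L3 [t0 [q [H0 Hq ->]]]];
      exists t0, q; split => //; rewrite inE.
      by rewrite H0 orbT.
    by move: H0; rewrite inE => ->.
  move=> [t0 [q [H0 Hq ->]]]; move: H0; rewrite inE => /orP[/eqP E|H0].
    by rewrite E (L3 (lft t q)).2 ?orbT //; exists t, q; split => //; rewrite inE.
  by rewrite (I3 (lft t0 q)).2 //; exists t0, q.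
- by move=> t0; rewrite inE => /orP[/eqP ->|/I4].
- move=> t0 e; rewrite inE => /orP[/eqP -> He|H0 He].
    apply: H2; first exact: UE_L (HKE He).
    move/sfst => [E|E]; move: (lft_inj E) => [_ E']; apply: (HKU He); by rewrite E'.
  apply: H1; first exact: I5.
  move/sfst => [E|E]; move: (lft_inj E) => [_ E']; apply: (HKU He); by rewrite E'.
move=> u v _ ns HL; apply: (H2 _ _ HL) => -[[E1 E2]|[E1 E2]]; apply: ns.
  by left; split; [apply: (lft_inj E1).2 | apply: (lft_inj E2).2].
by right; split; [apply: (lft_inj E1).2 | apply: (lft_inj E2).2].
Qed.


Lemma osite_intra d g P P' Q Q' : (0 < g)%N -> d = size n ->
  osite c d g P P' Q Q' -> ~ same P P' Q Q'.
Proof.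
move=> Hg Hd [U1 U2 [j [Hj [G1 G2]]]] [[E1 E2]|[E1 E2]].
  subst Q; have [HP _] := UE_c_mem U1.
  have Hs := size_c HP.
  have Hj' : (j < size P)%N by rewrite Hs -Hd.
  have : nth 0 (vsub P P) j = 0 by rewrite nth_vsub // subrr.
  by case: G1 => ->; rewrite nth_scal // eqxx => /eqP; rewrite ?oppr_eq0 natz_neq0.
have Hadj := AdjC_UE Hca U1.
subst P' Q'; case: Hadj => _ [_ HC].
rewrite Hd in G1.
by case: G1 => Hv; apply: (not_C_scal Hal Hbe HC Hv).
Qed.

Hypothesis Hco : coprime al be.
Hypothesis Hk : (al + be - 1 <= k)%N.
Notation u := (uu al be).

Lemma mem_up (p : point) : p \in [:: PA; PA'; QA; QA'; PB; PB'; QB; QB'] ->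
   p \in [:: PA; PA'; QA; QA'; PB; PB'; QB; QB'].
Proof. by []. Qed.

Lemma AB_same P P' Q Q' : P \in [:: PA; PA'; QA; QA'] ->
  Q \in [:: PB; PB'; QB; QB'] -> Q' \in [:: PB; PB'; QB; QB'] ->
  ~ same P P' Q Q'.
Proof.
by move=> h1 h2 h3 [[E _]|[E _]]; apply: (HAB h1); rewrite E.
Qed.

Lemma distz1 (a b : nat) : `|(a + b)%:Z - a%:Z| = b%:Z.
Proof. lia. Qed.

Lemma distz2 (a b : nat) : (b <= a)%N -> `|(a - b)%:Z - a%:Z| = b%:Z.
Proof. move=> H; lia. Qed.

Lemma distz3 (a b : nat) : (b <= a)%N -> `|a%:Z - (a - b)%:Z| = b%:Z.
Proof. move=> H; lia. Qed.

Lemma same_swap (a b p q : point) : same a b p q -> same p q a b.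
Proof. by case=> -[-> ->]; [left|right]. Qed.

Lemma HABl p q : p \in [:: PA; PA'; QA; QA'] -> q \in [:: PB; PB'; QB; QB'] -> q = p -> False.
Proof. by move=> h1 h2 E; apply: (HAB h1); rewrite -E. Qed.

Lemma stage1 i : (1 <= i <= al + be - 1)%N ->
  exists D, [/\ Inv [seq u j | j <- iota 1 i] D,
   UE D (lft (u i) QA) (lft (u i) QA'),
   UE D (lft (u i) PB) (lft (u i) PB') &
   forall j, (1 <= j <= i)%N -> (be <= u j)%N -> UE D (lft (u j) PB) (lft (u j) PB')].
Proof.
have [UA1 UA2 _] := HA; have [UB1 UB2 _] := HB.
elim: i => [|i IH] // Hi.
case: (posnP i) => [i0|ipos].
  subst i; exists (L (u 1)); rewrite (uu_1 Hal Hbe Hco).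
  have Hl : (1 <= al <= k)%N by apply/andP; split => //; lia.
  split.
  - have -> : [seq u j | j <- iota 1 1] = [:: u 1] by [].
    by rewrite (uu_1 Hal Hbe Hco); apply: Inv_layer.
  - exact: UE_L.
  - exact: UE_L.
  - move=> j Hj; have -> : j = 1%N by lia.
    by rewrite (uu_1 Hal Hbe Hco) => _; apply: UE_L.
have [D [I1 E1 E2 E3]] := IH (ltac:(lia)).
have HuiM := uu_lt be Hal i.
have Hui0 : (0 < u i)%N by apply: (uu_pos Hal Hbe Hco); lia.
have Hui10 : (0 < u i.+1)%N by apply: (uu_pos Hal Hbe Hco); lia.
have HuiM' := uu_lt be Hal i.+1.
have tS : u i.+1 \notin [seq u j | j <- iota 1 i].
  apply/mapP => -[j Hj E]; move: Hj; rewrite mem_iota => Hj.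
  have := uu_inj Hal Hbe Hco (i := i.+1) (j := j); lia.
have Ht : (1 <= u i.+1 <= k)%N by lia.
have t'S : u i \in [seq u j | j <- iota 1 i] by apply: map_f; rewrite mem_iota; lia.
have Seq : u i.+1 :: [seq u j | j <- iota 1 i] =i [seq u j | j <- iota 1 i.+1].
  have -> : iota 1 i.+1 = iota 1 i ++ [:: i.+1] by rewrite -[i.+1]addn1 iotaD add1n addn1.
  by move=> x; rewrite map_cat mem_cat !inE orbC.
have ES := uu_S Hal Hbe Hco i.
have mPA : PA \in [:: PA; PA'; QA; QA'; PB; PB'; QB; QB'] by rewrite !inE eqxx ?orbT.
have mPA' : PA' \in [:: PA; PA'; QA; QA'; PB; PB'; QB; QB'] by rewrite !inE eqxx ?orbT.
have mQA : QA \in [:: PA; PA'; QA; QA'; PB; PB'; QB; QB'] by rewrite !inE eqxx ?orbT.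
have mQA' : QA' \in [:: PA; PA'; QA; QA'; PB; PB'; QB; QB'] by rewrite !inE eqxx ?orbT.
have mPB : PB \in [:: PA; PA'; QA; QA'; PB; PB'; QB; QB'] by rewrite !inE eqxx ?orbT.
have mPB' : PB' \in [:: PA; PA'; QA; QA'; PB; PB'; QB; QB'] by rewrite !inE eqxx ?orbT.
have mQB : QB \in [:: PA; PA'; QA; QA'; PB; PB'; QB; QB'] by rewrite !inE eqxx ?orbT.
have mQB' : QB' \in [:: PA; PA'; QA; QA'; PB; PB'; QB; QB'] by rewrite !inE eqxx ?orbT.
case: ifP ES => Hc1 ES.
- have Hg : (be = al /\ `|(u i.+1)%:Z - (u i)%:Z| = be%:Z) \/
            (be = be /\ `|(u i.+1)%:Z - (u i)%:Z| = al%:Z) by right; rewrite ES; split => //; apply: distz1.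
  have [D' [I' Hold Hnew]] := Inv_step I1 tS Ht t'S HB Hg mPB mPB' mQB mQB' E2.
  exists D'; split.
  + exact: Inv_eq Seq I'.
  + apply: Hnew => //; last exact: UE_L.
    by apply: AB_same; rewrite !inE eqxx ?orbT.
  + apply: Hnew => //; last exact: UE_L.
    exact: (osite_intra Hbe erefl HB).
  + move=> j Hj Hbj; case: (ltnP j i.+1) => Hji.
      apply: Hold; first by apply: E3 => //; move: Hj Hji; clear; lia.
      move=> -[[/lft_inj [Ej _] _]|[/lft_inj [Ej _] _]];
        move: Hbj Hc1; rewrite Ej; clear; lia.
    have -> : j = i.+1 by move: Hj Hji; clear; lia.
    apply: Hnew => //; last exact: UE_L.
    exact: (osite_intra Hbe erefl HB).
- have Hg : (al = al /\ `|(u i.+1)%:Z - (u i)%:Z| = be%:Z) \/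
            (al = be /\ `|(u i.+1)%:Z - (u i)%:Z| = al%:Z) by left; rewrite ES; split => //; apply: distz2; move: Hc1 HuiM; clear; lia.
  have [D' [I' Hold Hnew]] := Inv_step I1 tS Ht t'S (osite_sym HA) Hg mQA mQA' mPA mPA' E1.
  exists D'; split.
  + exact: Inv_eq Seq I'.
  + apply: Hnew => //; last exact: UE_L.
    move/same_swap; exact: (osite_intra Hal erefl HA).
  + apply: Hnew => //; last exact: UE_L.
    by move=> [[E _]|[E _]]; apply: (HABl _ _ E); rewrite !inE eqxx ?orbT.
  + move=> j Hj Hbj; case: (ltnP j i.+1) => Hji.
      apply: Hold; first by apply: E3 => //; move: Hj Hji; clear; lia.
      by move=> [[/lft_inj [_ E] _]|[/lft_inj [_ E] _]]; apply: (HABl _ _ E);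
        rewrite !inE eqxx ?orbT.
    have -> : j = i.+1 by move: Hj Hji; clear; lia.
    apply: Hnew => //; last exact: UE_L.
    by move=> [[E _]|[E _]]; apply: (HABl _ _ E); rewrite !inE eqxx ?orbT.
Qed.

Lemma stage2 K : (al + be - 1 <= K <= k)%N ->
  exists D, Inv (iota 1 K) D /\
    forall t, (K - al < t <= K)%N -> UE D (lft t PB) (lft t PB').
Proof.
have [UA1 UA2 _] := HA; have [UB1 UB2 _] := HB.
have mPB : PB \in [:: PA; PA'; QA; QA'; PB; PB'; QB; QB'] by rewrite !inE eqxx ?orbT.
have mPB' : PB' \in [:: PA; PA'; QA; QA'; PB; PB'; QB; QB'] by rewrite !inE eqxx ?orbT.
have mQB : QB \in [:: PA; PA'; QA; QA'; PB; PB'; QB; QB'] by rewrite !inE eqxx ?orbT.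
have mQB' : QB' \in [:: PA; PA'; QA; QA'; PB; PB'; QB; QB'] by rewrite !inE eqxx ?orbT.
elim: K => [|K IH] HK.
  by move: HK Hal Hbe; clear; lia.
case: (eqVneq K.+1 (al + be - 1)%N) => EK.
  have [D [I1 _ _ E3]] := stage1 (i := (al + be - 1)%N) (ltac:(move: Hal Hbe; clear; lia)).
  exists D; split.
    rewrite EK; apply: Inv_eq I1; exact: uu_perm Hal Hbe Hco.
  move=> t Ht.
  have : t \in [seq u j | j <- iota 1 (al + be - 1)%N].
    by rewrite (uu_perm Hal Hbe Hco) mem_iota; move: Ht EK; clear; lia.
  move=> /mapP [j Hj Etj]; rewrite Etj in Ht *; apply: E3.
    by move: Hj; rewrite mem_iota; clear; lia.
  move: Ht EK; clear; lia.
have [D [I1 E1]] := IH (ltac:(move: HK EK; clear; lia)).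
have tS : K.+1 \notin iota 1 K by rewrite mem_iota; clear; lia.
have Ht : (1 <= K.+1 <= k)%N by move: HK; clear; lia.
have t'S : (K.+1 - al)%N \in iota 1 K by rewrite mem_iota; move: HK EK Hbe Hal; clear; lia.
have Hg : (be = al /\ `|(K.+1)%:Z - (K.+1 - al)%:Z| = be%:Z) \/
          (be = be /\ `|(K.+1)%:Z - (K.+1 - al)%:Z| = al%:Z).
  by right; split => //; apply: distz3; move: HK EK Hbe; clear; lia.
have [D' [I' Hold Hnew]] := Inv_step I1 tS Ht t'S HB Hg mPB mPB' mQB mQB'
   (E1 (K.+1 - al)%N (ltac:(move: HK EK Hbe Hal; clear; lia))).
exists D'; split.
  by apply: Inv_eq I' => x; rewrite inE !mem_iota; clear; lia.
move=> t Ht0; case: (eqVneq t K.+1) => Et.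
  rewrite Et; apply: Hnew => //; last exact: UE_L.
  exact: (osite_intra Hbe erefl HB).
apply: Hold; first by apply: E1; move: Ht0 Et; clear; lia.
move=> -[[/lft_inj [E _] _]|[/lft_inj [E _] _]]; move: Ht0; rewrite E; clear; lia.
Qed.

Lemma ham_Inv D : Inv (iota 1 k) D -> (3 <= size c)%N -> ham_cycle al be mb D.
Proof.
case=> I1 I2 I3 I4 I5 Hs.
have k1 : (1 <= k)%N by move: Hk Hal Hbe; clear; lia.
split => //.
- have sub : {subset L 1 <= D}.
    move=> p /mapP [q Hq ->]; apply/I3; exists 1%N, q; split => //.
    by rewrite mem_iota; move: k1; clear; lia.
  have U : uniq (L 1) by rewrite map_inj_uniq //; exact: lft_injt.
  have := uniq_leq_size U sub.
  by rewrite /L size_map => H; apply: leq_trans H.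
- move=> p; split.
    move/I3 => [t [q [Ht Hq ->]]]; apply: board_lft; first exact/Hcb.
    exact: I4.
  move/board_inv => [t [q [Ht Hq ->]]]; apply/I3; exists t, q; split => //.
    by rewrite mem_iota; move: Ht; clear; lia.
  exact/Hcb.
- by move=> i Hi; apply: I2; apply: pt_edge.
Qed.

Lemma osite_lft D t g P P' Q Q' : osite c (size n) g P P' Q Q' ->
  UE D (lft t P) (lft t P') -> UE D (lft t Q) (lft t Q') ->
  osite D (size mb) g (lft t P) (lft t P') (lft t Q) (lft t Q').
Proof.
case=> U1 U2 [j [Hj [G1 G2]]] V1 V2; split => //; exists j.
have [h1 h2] := UE_c_mem U1; have [h3 h4] := UE_c_mem U2.
rewrite /mb size_rcons; split; first by apply: ltn_trans Hj _.
by split; apply: gv_lft => //; apply: size_c.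
Qed.

Variables (RA RA' SA SA' RB RB' SB SB' : point).
Hypotheses (KA : osite c (size n) al RA RA' SA SA')
  (KB : osite c (size n) be RB RB' SB SB').
Hypothesis HKEd : KE = [:: (RA, RA'); (SA, SA'); (RB, RB'); (SB, SB')].
Hypothesis H12 : forall p, p \in [:: PA; PA'; QA; QA'] -> p \in [:: RA; RA'; SA; SA'] -> False.
Hypothesis H14 : forall p, p \in [:: PA; PA'; QA; QA'] -> p \in [:: RB; RB'; SB; SB'] -> False.
Hypothesis H23 : forall p, p \in [:: RA; RA'; SA; SA'] -> p \in [:: PB; PB'; QB; QB'] -> False.
Hypothesis H24 : forall p, p \in [:: RA; RA'; SA; SA'] -> p \in [:: RB; RB'; SB; SB'] -> False.
Hypothesis H34 : forall p, p \in [:: PB; PB'; QB; QB'] -> p \in [:: RB; RB'; SB; SB'] -> False.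
Hypothesis Hs3 : (3 <= size c)%N.

Lemma final_good2 : (2 <= k)%N -> has_good_cycle al be mb.
Proof.
move=> k2.
have HK2 : (al + be - 1 <= k <= k)%N by rewrite Hk leqnn.
have [DD [ID _]] := stage2 HK2.
have Hh := ham_Inv ID Hs3.
have [_ _ _ _ I5] := ID.
have m1 : (1 \in iota 1 k)%N by rewrite mem_iota; move: k2; clear; lia.
have m2 : (2 \in iota 1 k)%N by rewrite mem_iota; move: k2; clear; lia.
have ue t e : t \in iota 1 k -> e \in KE -> UE DD (lft t e.1) (lft t e.2) by apply: I5.
have eK1 : (RA, RA') \in KE by rewrite HKEd !inE eqxx.
have eK2 : (SA, SA') \in KE by rewrite HKEd !inE eqxx ?orbT.
have eK3 : (RB, RB') \in KE by rewrite HKEd !inE eqxx ?orbT.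
have eK4 : (SB, SB') \in KE by rewrite HKEd !inE eqxx ?orbT.
apply: (good_of Hh (X1 := map (lft 1) [:: RA; RA'; SA; SA'])
                (X2 := map (lft 2) [:: RA; RA'; SA; SA'])
                (X3 := map (lft 1) [:: RB; RB'; SB; SB'])
                (X4 := map (lft 2) [:: RB; RB'; SB; SB'])) => //.
- exists (lft 1 RA), (lft 1 RA'), (lft 1 SA), (lft 1 SA'); split => //.
  by apply: osite_lft => //; [apply: (ue 1%N _ m1 eK1) | apply: (ue 1%N _ m1 eK2)].
- exists (lft 2 RA), (lft 2 RA'), (lft 2 SA), (lft 2 SA'); split => //.
  by apply: osite_lft => //; [apply: (ue 2%N _ m2 eK1) | apply: (ue 2%N _ m2 eK2)].
- exists (lft 1 RB), (lft 1 RB'), (lft 1 SB), (lft 1 SB'); split => //.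
  by apply: osite_lft => //; [apply: (ue 1%N _ m1 eK3) | apply: (ue 1%N _ m1 eK4)].
- exists (lft 2 RB), (lft 2 RB'), (lft 2 SB), (lft 2 SB'); split => //.
  by apply: osite_lft => //; [apply: (ue 2%N _ m2 eK3) | apply: (ue 2%N _ m2 eK4)].
- by apply: disj_lft; left.
- by apply: disj_lft; right.
- by apply: disj_lft; left.
- by apply: disj_lft; left.
- by apply: disj_lft; right.
- by apply: disj_lft; left.
Qed.

Lemma final_good1 : k = 1%N -> has_good_cycle al be mb.
Proof.
move=> k1.
have Ht : (1 <= 1 <= k)%N by rewrite k1.
have ID := Inv_layer Ht.
have ID' : Inv (iota 1 k) (L 1) by rewrite k1.
have Hh := ham_Inv ID' Hs3.
have [UA1 UA2 _] := HA; have [UB1 UB2 _] := HB.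
have [VA1 VA2 _] := KA; have [VB1 VB2 _] := KB.
apply: (good_of Hh (X1 := map (lft 1) [:: PA; PA'; QA; QA'])
                (X2 := map (lft 1) [:: RA; RA'; SA; SA'])
                (X3 := map (lft 1) [:: PB; PB'; QB; QB'])
                (X4 := map (lft 1) [:: RB; RB'; SB; SB'])) => //.
- exists (lft 1 PA), (lft 1 PA'), (lft 1 QA), (lft 1 QA'); split => //.
  by apply: osite_lft => //; apply: UE_L.
- exists (lft 1 RA), (lft 1 RA'), (lft 1 SA), (lft 1 SA'); split => //.
  by apply: osite_lft => //; apply: UE_L.
- exists (lft 1 PB), (lft 1 PB'), (lft 1 QB), (lft 1 QB'); split => //.
  by apply: osite_lft => //; apply: UE_L.
- exists (lft 1 RB), (lft 1 RB'), (lft 1 SB), (lft 1 SB'); split => //.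
  by apply: osite_lft => //; apply: UE_L.
- by apply: disj_lft; right.
- by apply: disj_lft; right.
- by apply: disj_lft; right.
- by apply: disj_lft; right.
- by apply: disj_lft; right.
- by apply: disj_lft; right.
Qed.
End Construction.

Lemma dvd_of_norm (g a : nat) (v : int) : (g %| a)%N -> `|v| = a%:Z -> (g%:Z %| v)%Z.
Proof.
move=> H E; rewrite dvdzE /=.
have : (absz v)%:Z = a%:Z by rewrite abszE E.
by case=> ->.
Qed.

Lemma adj_dvd al be n a b l : adj al be n a b -> (l < size n)%N ->
  ((gcdn al be)%:Z %| nth 0 a l - nth 0 b l)%Z.
Proof.
move=> [[Ha _] [[Hb _] [Hs [i [j [Hi Hj Hij [Ni Nj] Nl]]]]]] Hl.
rewrite -nth_vsub ?Ha ?Hb //.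
case: (eqVneq l i) => [->|li]; first exact: dvd_of_norm (dvdn_gcdl _ _) Ni.
case: (eqVneq l j) => [->|lj]; first exact: dvd_of_norm (dvdn_gcdr _ _) Nj.
by rewrite Nl // dvdz0.
Qed.

Lemma coprime_of_ham al be n c : all (fun x => (0 < x)%N) n ->
  ham_cycle al be n c -> coprime al be.
Proof.
move=> Hn [Hs Hu Hb Ha].
set G := (gcdn al be)%:Z.
have c0 : (0 < size c)%N by apply: leq_trans Hs.
have HB i l : (i < size c)%N -> (l < size n)%N -> (G %| nth 0 (pt c i) l - nth 0 (pt c 0) l)%Z.
  elim: i => [|i IH] Hi Hl; first by rewrite subrr dvdz0.
  have := adj_dvd (Ha i (ltnW Hi)) Hl.
  have -> : nxt c i = i.+1 by rewrite /nxt modn_small.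
  move=> H; have := rpredB (IH (ltnW Hi) Hl) H.
  by have -> : forall x y z : int, (y - z) - (y - x) = x - z by move=> x y z; ring.
have Hall p l : in_board n p -> (l < size n)%N -> (G %| nth 0 p l - nth 0 (pt c 0) l)%Z.
  move=> /Hb Hp Hl; have Hi : (index p c < size c)%N by rewrite index_mem.
  have := HB _ l Hi Hl.
  by rewrite /pt modn_small // nth_index.
set o := nseq (size n) (1 : int).
have ob : in_board n o.
  split; first by rewrite size_nseq.
  move=> l Hl; rewrite nth_nseq Hl lexx /= lez_nat.
  by have := all_nthP 0%N Hn l Hl.
case: (boolP (has (fun x => 1 < x)%N n)) => [/hasP [x Hx H1]|/hasPn H].
  set l := index x n.
  have Hl : (l < size n)%N by rewrite index_mem.
  set e := mkseq (fun l' => if l' == l then (2 : int) else 1) (size n).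
  have eb : in_board n e.
    split; first by rewrite size_mkseq.
    move=> l' Hl'; rewrite nth_mkseq //; case: eqP => [->|_].
      by rewrite nth_index // lez_nat.
    by rewrite lexx /= lez_nat; have := all_nthP 0%N Hn l' Hl'.
  have := rpredB (Hall e l eb Hl) (Hall o l ob Hl).
  have -> : forall x y z : int, (x - z) - (y - z) = x - y by move=> ? ? ?; ring.
  rewrite /e /o nth_mkseq // nth_nseq Hl eqxx.
  rewrite dvdzE /= => /eqP.
  rewrite addnK => /eqP Hd1; have : (gcdn al be %| 1)%N by exact: Hd1.
  by rewrite dvdn1.
exfalso.
have allo p : in_board n p -> p = o.
  move=> [Hsp Hp]; apply: (@eq_from_nth _ 0); first by rewrite size_nseq.
  move=> l Hl; rewrite Hsp in Hl; rewrite nth_nseq Hl.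
  have := Hp l Hl; have := H _ (mem_nth 0%N Hl); rewrite -leqNgt => H2.
  move=> /andP [h1 h2]; apply/eqP; rewrite eq_le h1 andbT.
  by apply: le_trans h2 _; rewrite lez_nat.
case: c Hs Hu Hb {Ha HB Hall c0} => [|a [|b s]] // _ /= /andP [Hab _] Hb.
have Ea : a = o by apply: allo; apply/Hb; rewrite inE eqxx.
have Eb : b = o by apply: allo; apply/Hb; rewrite !inE eqxx orbT.
by move: Hab; rewrite Ea Eb inE eqxx.
Qed.

Local Close Scope ring_scope.

Theorem proposition5p4 (alpha beta : nat) (n : seq nat) (k : nat) :
  (0 < alpha)%N -> (0 < beta)%N -> all (fun x => (0 < x)%N) n ->
  has_good_cycle alpha beta n ->
  (alpha + beta - 1 <= k)%N ->
  has_good_cycle alpha beta (rcons n k).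
Proof.
move=> Hal Hbe Hn [c [Hh [s1 [s2 [s3 [s4 [S1 S2 S3 S4 [D12 D13 D14 D23 [D24 D34]]]]]]]]] Hk.
have Hco := coprime_of_ham Hn Hh.
have [Hs Hc Hcb Hadj] := Hh.
have Hca : AdjC alpha beta n c.
  by move=> a b /edge_pt [i [Hi <- <-]]; apply: Hadj.
have [PA [PA' [QA [QA' [HA E1]]]]] := site_osite S1.
have [RA [RA' [SA [SA' [KA E2]]]]] := site_osite S2.
have [PB [PB' [QB [QB' [HB E3]]]]] := site_osite S3.
have [RB [RB' [SB [SB' [KB E4]]]]] := site_osite S4.
have H12 : forall p, p \in [:: PA; PA'; QA; QA'] -> p \in [:: RA; RA'; SA; SA'] -> False.
  by move=> p h1 h2; apply: (D12 p); rewrite ?E1 ?E2.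
have H13 : forall p, p \in [:: PA; PA'; QA; QA'] -> p \in [:: PB; PB'; QB; QB'] -> False.
  by move=> p h1 h2; apply: (D13 p); rewrite ?E1 ?E3.
have H14 : forall p, p \in [:: PA; PA'; QA; QA'] -> p \in [:: RB; RB'; SB; SB'] -> False.
  by move=> p h1 h2; apply: (D14 p); rewrite ?E1 ?E4.
have H23 : forall p, p \in [:: RA; RA'; SA; SA'] -> p \in [:: PB; PB'; QB; QB'] -> False.
  by move=> p h1 h2; apply: (D23 p); rewrite ?E2 ?E3.
have H24 : forall p, p \in [:: RA; RA'; SA; SA'] -> p \in [:: RB; RB'; SB; SB'] -> False.
  by move=> p h1 h2; apply: (D24 p); rewrite ?E2 ?E4.
have H34 : forall p, p \in [:: PB; PB'; QB; QB'] -> p \in [:: RB; RB'; SB; SB'] -> False.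
  by move=> p h1 h2; apply: (D34 p); rewrite ?E3 ?E4.
set KE := [:: (RA, RA'); (SA, SA'); (RB, RB'); (SB, SB')].
have [KA1 KA2 _] := KA; have [KB1 KB2 _] := KB.
have HKE : forall e, e \in KE -> UE c e.1 e.2.
  by move=> e; rewrite !inE => /or4P [] /eqP -> /=.
have split8 p : p \in [:: PA; PA'; QA; QA'; PB; PB'; QB; QB'] ->
    p \in [:: PA; PA'; QA; QA'] \/ p \in [:: PB; PB'; QB; QB'].
  by rewrite -[[:: PA; PA'; QA; QA'; PB; PB'; QB; QB']]/([:: PA; PA'; QA; QA'] ++
    [:: PB; PB'; QB; QB']) mem_cat => /orP.
have HKU : forall e, e \in KE ->
    e.1 \in [:: PA; PA'; QA; QA'; PB; PB'; QB; QB'] -> False.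
  move=> e He /(split8 _) [] h; move: He; rewrite !inE => /or4P [] /eqP Ee;
    rewrite Ee /= in h;
    by [apply: (H12 _ h); rewrite !inE eqxx ?orbT | apply: (H23 _ _ h); rewrite !inE eqxx ?orbT
       | apply: (H14 _ h); rewrite !inE eqxx ?orbT | apply: (H34 _ h); rewrite !inE eqxx ?orbT].
have k1 : (1 <= k)%N by move: Hk Hal Hbe; clear; lia.
case: (eqVneq k 1%N) => [Ek|Ek].
  exact: (final_good1 (KE := KE) Hal Hbe Hc Hcb Hca HA HB H13 HKE Hk KA KB
           H12 H14 H23 H24 H34 Hs Ek).
have k2 : (2 <= k)%N by move: k1 Ek; clear; lia.
exact: (final_good2 Hal Hbe Hc Hcb Hca HA HB H13 HKE HKU Hco Hk KA KB erefl H24 Hs k2).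
Qed.
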